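(* In System $\mathsf{F_{<:}^{K\top}}$, if $\Theta \vdash_A R <: S$ and $\Theta \vdash_A S <: T$, then $\Theta \vdash_A R <: T$.
   Context: System $\mathsf{F_{<:}^{K\top}}$: raw types $T ::= \top \mid X \mid T\to T \mid \forall^{\mathsf K}(X<:T).T \mid \forall^\top(X<:T).T$, up to $\alpha$-conversion. Contexts $\Theta$: finite sequences of $X<:T$ or $x:T$ with distinct variables, each type well-formed (free type variables declared earlier) over the preceding part; $\Theta\vdash T$ means $T$ is well-formed over well-formed $\Theta$. Algorithmic subtyping $\Theta\vdash_A S<:T$ (for $\Theta\vdash S$, $\Theta\vdash T$) is generated by: (1) $\Theta\vdash_A T<:\top$; (2) $\Theta\vdash_A X<:X$; (3) if $T\not\equiv\top$, $T\not\equiv X$ and $\Theta,X<:S,\Theta'\vdash_A S<:T$, then $\Theta,X<:S,\Theta'\vdash_A X<:T$; (4) from $\Theta\vdash_A S'<:S$ and $\Theta\vdash_A T<:T'$ infer $\Theta\vdash_A S\to T<:S'\to T'$; (5) from $\Theta,X<:S\vdash_A T<:T'$ infer $\Theta\vdash_A\forall^{\mathsf K}(X<:S).T<:\forall^{\mathsf K}(X<:S).T'$; (6) from $\Theta\vdash_A T_0<:S_0$ and $\Theta,X<:S_0\vdash_A S_1<:T_1$ infer $\Theta\vdash_A\forall^{\mathsf K}(X<:S_0).S_1<:\forall^\top(X<:T_0).T_1$; (7) from $\Theta\vdash_A T_0<:S_0$ and $\Theta,X<:\top\vdash_A S_1<:T_1$ infer $\Theta\vdash_A\forall^\top(X<:S_0).S_1<:\forall^\top(X<:T_0).T_1$.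 *)

(* Defs.v *)
From Stdlib Require Import Arith List.
Import ListNotations.

(* Raw types: Top | X | T -> T | forall^K (X<:T).T | forall^Top (X<:T).T.
   Type variables are de Bruijn indices into the context. *)
Inductive typ : Type :=
  | ty_top : typ
  | ty_var : nat -> typ
  | ty_arrow : typ -> typ -> typ
  | ty_allK : typ -> typ -> typ      (* forall^K (X<:T1). T2, X bound in T2 *)
  | ty_allT : typ -> typ -> typ.     (* forall^Top (X<:T1). T2, X bound in T2 *)

(* Both occupy a de Bruijn position;
   the type in an entry is relative to the part of the context after it
   (i.e. the preceding part, the list being innermost-first). *)
Inductive binding : Type :=
  | b_sub : typ -> binding
  | b_var : typ -> binding.

Definition ctx := list binding.

Fixpoint tshift (c : nat) (T : typ) : typ :=
  match T with
  | ty_top => ty_top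
  | ty_var n => ty_var (if Nat.leb c n then S n else n)
  | ty_arrow T1 T2 => ty_arrow (tshift c T1) (tshift c T2)
  | ty_allK T1 T2 => ty_allK (tshift c T1) (tshift (S c) T2)
  | ty_allT T1 T2 => ty_allT (tshift c T1) (tshift (S c) T2)
  end.

(* Bound of type variable n in the context, expressed relative to the
   whole context; None if entry n is absent or is a term binding. *)
Fixpoint get_bound (E : ctx) (n : nat) : option typ :=
  match E, n with
  | b_sub U :: _, O => Some (tshift 0 U)
  | _ :: E', S m => option_map (tshift 0) (get_bound E' m)
  | _, _ => None
  end.

Fixpoint wf_typ (E : ctx) (T : typ) : Prop :=
  match T with
  | ty_top => True
  | ty_var n => exists U, get_bound E n = Some U
  | ty_arrow T1 T2 => wf_typ E T1 /\ wf_typ E T2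
  | ty_allK T1 T2 => wf_typ E T1 /\ wf_typ (b_sub T1 :: E) T2
  | ty_allT T1 T2 => wf_typ E T1 /\ wf_typ (b_sub T1 :: E) T2
  end.

(* Well-formed contexts: each type well-formed over the preceding part.
   (Distinctness of variables is automatic with de Bruijn indices.) *)
Fixpoint wf_ctx (E : ctx) : Prop :=
  match E with
  | [] => True
  | b_sub T :: E' => wf_ctx E' /\ wf_typ E' T
  | b_var T :: E' => wf_ctx E' /\ wf_typ E' T
  end.

Inductive asub : ctx -> typ -> typ -> Prop :=
  | asub_top : forall E T,
      wf_ctx E -> wf_typ E T ->
      asub E T ty_top
  | asub_refl_tvar : forall E n,
      wf_ctx E -> wf_typ E (ty_var n) ->
      asub E (ty_var n) (ty_var n)
  | asub_trans_tvar : forall E n S T,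
      get_bound E n = Some S ->
      T <> ty_top -> T <> ty_var n ->
      asub E S T ->
      asub E (ty_var n) T
  | asub_arrow : forall E S S' T T',
      asub E S' S -> asub E T T' ->
      asub E (ty_arrow S T) (ty_arrow S' T')
  | asub_allK : forall E S T T',
      asub (b_sub S :: E) T T' ->
      asub E (ty_allK S T) (ty_allK S T')
  | asub_allK_allT : forall E S0 S1 T0 T1,
      asub E T0 S0 -> asub (b_sub S0 :: E) S1 T1 ->
      asub E (ty_allK S0 S1) (ty_allT T0 T1)
  | asub_allT : forall E S0 S1 T0 T1,
      asub E T0 S0 -> asub (b_sub ty_top :: E) S1 T1 ->
      asub E (ty_allT S0 S1) (ty_allT T0 T1).

(* Main.v *)
Require Import Defs.
From Stdlib Require Import Arith List Lia.
Import ListNotations.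

Lemma gb_some : forall G E U U' n,
  (exists X, get_bound (G ++ b_sub U :: E) n = Some X) ->
  (exists X, get_bound (G ++ b_sub U' :: E) n = Some X).
Proof.
  induction G as [|b G IH]; intros E U U' n [X HX].
  - destruct n; simpl in *; eauto.
  - destruct b; destruct n; simpl in *; try discriminate; eauto;
    destruct (get_bound (G ++ b_sub U :: E) n) eqn:Hg; simpl in HX; try discriminate;
    destruct (IH E U U' n (ex_intro _ _ Hg)) as [Y HY]; rewrite HY; simpl; eauto.
Qed.

Lemma gb_other : forall G E U U' n, n <> length G ->
  get_bound (G ++ b_sub U :: E) n = get_bound (G ++ b_sub U' :: E) n.
Proof.
  induction G as [|b G IH]; intros E U U' n Hn.
  - destruct n; simpl in *; [lia|]. reflexivity.
  - destruct b; destruct n; simpl in *; try reflexivity;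
    rewrite (IH E U U' n); auto.
Qed.

Lemma gb_top : forall G E, get_bound (G ++ b_sub ty_top :: E) (length G) = Some ty_top.
Proof.
  induction G as [|b G IH]; intros E; simpl; auto.
  destruct b; rewrite IH; reflexivity.
Qed.

Lemma wf_typ_tr : forall T G E U U',
  wf_typ (G ++ b_sub U :: E) T -> wf_typ (G ++ b_sub U' :: E) T.
Proof.
  induction T; intros G E U U' H; simpl in *; auto.
  - eapply gb_some; eauto.
  - destruct H; split; eauto.
  - destruct H; split; eauto.
    apply (IHT2 (b_sub T1 :: G) E U U'). exact H0.
  - destruct H; split; eauto.
    apply (IHT2 (b_sub T1 :: G) E U U'). exact H0.
Qed.

Lemma wf_ctx_tr : forall G E U U',
  wf_ctx (G ++ b_sub U :: E) -> wf_typ E U' -> wf_ctx (G ++ b_sub U' :: E).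
Proof.
  induction G as [|b G IH]; intros E U U' H HU; simpl in *.
  - tauto.
  - destruct b; destruct H; split; eauto using wf_typ_tr.
Qed.

Lemma regular : forall E A B, asub E A B -> wf_ctx E /\ wf_typ E A /\ wf_typ E B.
Proof.
  induction 1; simpl in *; try (intuition eauto; fail).
  - intuition. apply (wf_typ_tr T1 [] E S0 T0). assumption.
  - intuition.
    + apply (wf_typ_tr S1 [] E ty_top S0). assumption.
    + apply (wf_typ_tr T1 [] E ty_top T0). assumption.
Qed.

Lemma top_not_sub : forall E T, asub E ty_top T -> T = ty_top.
Proof. intros E T H; inversion H; auto. Qed.

Lemma narrow : forall E' A B, asub E' A B -> forall G E S,
  E' = G ++ b_sub ty_top :: E -> wf_typ E S -> asub (G ++ b_sub S :: E) A B.
Proof.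
  induction 1; intros G E0 Sn HE HS; subst.
  - apply asub_top; eauto using wf_ctx_tr, wf_typ_tr.
  - apply asub_refl_tvar; eauto using wf_ctx_tr, wf_typ_tr.
  - destruct (Nat.eq_dec n (length G)) as [e|ne].
    + subst. rewrite gb_top in H. injection H as <-.
      apply top_not_sub in H2. contradiction.
    + eapply asub_trans_tvar; eauto.
      rewrite (gb_other G E0 Sn ty_top); auto.
  - apply asub_arrow; eauto.
  - apply asub_allK. apply (IHasub (b_sub S :: G) E0 Sn); auto.
  - apply asub_allK_allT; eauto. apply (IHasub2 (b_sub S0 :: G) E0 Sn); auto.
  - apply asub_allT; eauto. apply (IHasub2 (b_sub ty_top :: G) E0 Sn); auto.
Qed.

Fixpoint tsize (T : typ) : nat :=
  match T with
  | ty_top | ty_var _ => 1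
  | ty_arrow A B | ty_allK A B | ty_allT A B => S (tsize A + tsize B)
  end.

Lemma main : forall n, forall E R Q, asub E R Q -> tsize Q < n ->
  forall T, asub E Q T -> asub E R T.
Proof.
  induction n as [|n IHn]; intros E R Q H1 Hs; [lia|].
  induction H1; intros Tz Hq; simpl in Hs.
  - apply top_not_sub in Hq; subst. apply asub_top; auto.
  - exact Hq.
  - pose proof (IHasub Hs Tz Hq) as HS.
    destruct (regular _ _ _ Hq) as [Hc [_ HT]].
    destruct Tz as [| m | | |].
    + apply asub_top; simpl; eauto.
    + destruct (Nat.eq_dec m n0).
      * subst. apply asub_refl_tvar; simpl; eauto.
      * eapply asub_trans_tvar; eauto; congruence.
    + eapply asub_trans_tvar; eauto; congruence.
    + eapply asub_trans_tvar; eauto; congruence.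
    + eapply asub_trans_tvar; eauto; congruence.
  - inversion Hq; subst.
    + destruct (regular _ _ _ H1_) as [Hc _].
      destruct (regular _ _ _ H1_0) as [_ [? _]].
      destruct (regular _ _ _ H1_) as [_ [_ ?]].
      apply asub_top; simpl; auto.
    + apply asub_arrow; eapply IHn; eauto; lia.
  - inversion Hq; subst.
    + destruct (regular _ _ _ H1) as [Hc [? _]]. simpl in Hc.
      apply asub_top; simpl; tauto.
    + apply asub_allK. eapply IHn; eauto; lia.
    + apply asub_allK_allT; auto. eapply IHn; eauto; lia.
  - inversion Hq; subst.
    + destruct (regular _ _ _ H1_0) as [Hc [? _]]. simpl in Hc.
      apply asub_top; simpl; tauto.
    + apply asub_allK_allT.
      * eapply IHn; eauto; lia.
      * eapply IHn; [exact H1_0| lia |].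
        match goal with Hx : asub (b_sub ty_top :: E) _ _ |- _ => apply (narrow _ _ _ Hx [] E S0); auto end.
        destruct (regular _ _ _ H1_0) as [Hc _]. simpl in Hc; tauto.
  - inversion Hq; subst.
    + destruct (regular _ _ _ H1_0) as [Hc [Hw _]]. simpl in Hc.
      destruct (regular _ _ _ H1_) as [_ [_ Hw2]].
      apply asub_top; simpl; [tauto|split; auto].
      apply (wf_typ_tr S1 [] E ty_top S0). assumption.
    + apply asub_allT; eapply IHn; eauto; lia.
Qed.

Theorem lemma6p1 : forall (Theta : ctx) (R S T : typ),
  asub Theta R S -> asub Theta S T -> asub Theta R T.
Proof.
  intros Theta R S T H1 H2. eapply (main (Datatypes.S (tsize S))); eauto.
Qed.
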